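(* Let a graphical constant-sum game with $m$ agents be given and let $\hat{\mathbf{x}}^*=(\mathbf{x}^*_1,\ldots,\mathbf{x}^*_m)\in\Delta$ be a Nash equilibrium of it. Then for every $t\ge0$ and every function $\hat{\mathbf{x}}:[0,\infty)\to\Delta$ (with $\hat{\mathbf{p}}(\tau)=G(\hat{\mathbf{x}}(\tau))$), $$\int_0^t\langle\hat{\mathbf{x}}(\tau)-\hat{\mathbf{x}}^*,-\hat{\mathbf{p}}(\tau)\rangle\,d\tau\ \ge\ 0,$$ i.e. the game operator with shift $\hat{\mathbf{x}}^*$ is passive via the zero storage function. Moreover, if $\hat{\mathbf{x}}^*$ is fully mixed (every entry positive), then this integral equals $0$ for all such $\hat{\mathbf{x}}$ and $t$, i.e. the game operator with shift $\hat{\mathbf{x}}^*$ is lossless via the zero storage function.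
   Context: Agent $i\in\{1,\ldots,m\}$ has $n_i$ actions; $\Delta^{n}=\{\mathbf{x}\in\mathbb{R}^n:x_j\ge0,\sum_jx_j=1\}$ and $\Delta=\Delta^{n_1}\times\cdots\times\Delta^{n_m}$. A graphical game is given by matrices $\mathbf{A}^{ik}\in\mathbb{R}^{n_i\times n_k}$ for all ordered pairs $i\neq k$; for $\hat{\mathbf{x}}=(\mathbf{x}_1,\ldots,\mathbf{x}_m)\in\Delta$ the payoff vector of agent $i$ is $\mathbf{p}_i=\sum_{k\neq i}\mathbf{A}^{ik}\mathbf{x}_k$, and $G(\hat{\mathbf{x}})=\hat{\mathbf{p}}=(\mathbf{p}_1,\ldots,\mathbf{p}_m)$; agent $i$'s payoff is $\langle\mathbf{x}_i,\mathbf{p}_i\rangle$. It is graphical constant-sum if for every pair $\{i,k\}$ there is a constant $c^{\{i,k\}}$ with $\mathbf{A}^{ik}_{j\ell}+\mathbf{A}^{ki}_{\ell j}=c^{\{i,k\}}$ for all actions $j$ of $i$ and $\ell$ of $k$. A Nash equilibrium is $\hat{\mathbf{x}}^*\in\Delta$ such that for each $i$, $\mathbf{x}^*_i$ maximizes agent $i$'s payoff given the others' strategies $\mathbf{x}^*_k$, $k\neq i$. The game operator with shift $\hat{\mathbf{x}}^*$ has input $\hat{\mathbf{x}}-\hat{\mathbf{x}}^*$ and output $-\hat{\mathbf{p}}$, with no state; passivity via the zero storage function means the displayed integral inequality, losslessness means equality. *)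

(* Defs.v *)
From HB Require Import structures.
From mathcomp Require Import all_boot all_order all_algebra.
From mathcomp Require Import all_classical all_reals all_analysis.
Unset Printing Implicit Defensive.
Import Order.TTheory GRing.Theory Num.Theory.
Local Open Scope ring_scope.

Section GraphicalGames.
Variables (R : realType) (m : nat) (n : 'I_m -> nat).

Definition profile := forall i : 'I_m, 'I_(n i) -> R.

(* The game: matrices A i k : 'M_(n i, n k) (the diagonal blocks A i i are unused). *)
Definition game := forall i k : 'I_m, 'M[R]_(n i, n k).

Definition in_simplex {k : nat} (v : 'I_k -> R) : Prop :=
  (forall j, 0 <= v j) /\ \sum_(j < k) v j = 1.

Definition in_Delta (x : profile) : Prop := forall i, in_simplex (x i).

Definition inner {k : nat} (u v : 'I_k -> R) : R := \sum_(j < k) u j * v j.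

(* payoff vector p_i = sum_{k <> i} A^{ik} x_k ;  G(x) = (p_1, ..., p_m) *)
Definition payoff (A : game) (x : profile) (i : 'I_m) (j : 'I_(n i)) : R := \sum_(k < m | k != i) \sum_(l < n k) A i k j l * x k l.

Definition constant_sum (A : game) : Prop :=
  forall i k : 'I_m, i != k ->
    exists c : R, forall (j : 'I_(n i)) (l : 'I_(n k)), A i k j l + A k i l j = c.

Definition nash (A : game) (xs : profile) : Prop :=
  in_Delta xs /\
  forall i (y : 'I_(n i) -> R), in_simplex y ->
    inner y (payoff A xs i) <= inner (xs i) (payoff A xs i).

Definition fully_mixed (xs : profile) : Prop := forall i j, 0 < xs i j.

Definition supply (A : game) (xs x : profile) : R :=
  \sum_(i < m) inner (fun j => x i j - xs i j) (fun j => - payoff A x i j).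

End GraphicalGames.

Arguments profile {R m} n.
Arguments game {R m} n.
Arguments in_Delta {R m n} x.
Arguments payoff {R m n} A x i j.
Arguments constant_sum {R m n} A.
Arguments nash {R m n} A xs.
Arguments fully_mixed {R m n} xs.
Arguments supply {R m n} A xs x.

(* Main.v *)
Require Import Defs.
From HB Require Import structures.
From mathcomp Require Import all_boot all_order all_algebra.
From mathcomp Require Import all_classical all_reals all_analysis.
From mathcomp Require Import ring lra.
Import Order.TTheory GRing.Theory Num.Theory.
Local Open Scope ring_scope.
Local Open Scope classical_set_scope.

Section Aux.
Variables (R : realType) (m : nat) (n : 'I_m -> nat) (A : @game R m n).

Definition SS (x y : @profile R m n) : R := \sum_i inner R (x i) (payoff A y i).
Definition TT (x y : @profile R m n) (i k : 'I_m) : R :=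
  \sum_(j < n i) \sum_(l < n k) x i j * A i k j l * y k l.

Lemma SS_exp x y : SS x y = \sum_i \sum_(k | k != i) TT x y i k.
Proof.
rewrite /SS /inner /payoff /TT; apply: eq_bigr => i _.
under eq_bigr do rewrite mulr_sumr.
rewrite exchange_big /=; apply: eq_bigr => k _; apply: eq_bigr => j _.
rewrite mulr_sumr; apply: eq_bigr => l _; by rewrite mulrA.
Qed.

Lemma swap_pairs (F : 'I_m -> 'I_m -> R) :
  \sum_i \sum_(k | k != i) F i k = \sum_i \sum_(k | k != i) F k i.
Proof.
under eq_bigr do rewrite big_mkcond.
rewrite exchange_big; apply: eq_bigr => i _; rewrite [RHS]big_mkcond.
apply: eq_bigr => k _; by rewrite eq_sym.
Qed.

Lemma TT_pair (x y : @profile R m n) i k c : (forall j l, A i k j l + A k i l j = c) ->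
  in_simplex R (x i) -> in_simplex R (y k) ->
  TT x y i k + TT y x k i = c.
Proof.
move=> Hc [_ Hx] [_ Hy]; rewrite /TT [X in _ + X]exchange_big /= -big_split /=.
transitivity (\sum_(j < n i) \sum_(l < n k) c * (x i j * y k l)).
  apply: eq_bigr => j _; rewrite -big_split; apply: eq_bigr => l _ /=.
  rewrite -(Hc j l); ring.
under eq_bigr do rewrite -mulr_sumr -mulr_sumr Hy mulr1.
by rewrite -mulr_sumr Hx mulr1.
Qed.

Lemma K_const (x y z w : @profile R m n) : constant_sum A ->
  in_Delta x -> in_Delta y -> in_Delta z -> in_Delta w ->
  SS x y + SS y x = SS z w + SS w z.
Proof.
move=> Hcs Hx Hy Hz Hw.
rewrite !SS_exp (swap_pairs (TT y x)) (swap_pairs (TT w z)) -!big_split /=.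
apply: eq_bigr => i _; rewrite -!big_split /=; apply: eq_bigr => k Hki.
have [c Hc] := Hcs i k ltac:(by rewrite eq_sym).
by rewrite (TT_pair _ _ _ _ _ Hc (Hx i) (Hy k)) (TT_pair _ _ _ _ _ Hc (Hz i) (Hw k)).
Qed.

Lemma inner_sub k (u v w : 'I_k -> R) :
  inner R (fun j => u j - v j) (fun j => - w j) = inner R v w - inner R u w.
Proof.
rewrite /inner -sumrB; apply: eq_bigr => j _; ring.
Qed.

Lemma supply_eq (xs x : @profile R m n) : constant_sum A ->
  in_Delta xs -> in_Delta x ->
  supply A xs x = \sum_i (inner R (xs i) (payoff A xs i) - inner R (x i) (payoff A xs i)).
Proof.
move=> Hcs Hxs Hx.
have -> : supply A xs x = SS xs x - SS x x.
  by rewrite /supply /SS -sumrB; apply: eq_bigr => i _; rewrite inner_sub.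
rewrite sumrB -/(SS xs xs) -/(SS x xs).
have h1 := K_const x xs x x Hcs Hx Hxs Hx Hx.
have h2 := K_const x x xs xs Hcs Hx Hx Hxs Hxs.
lra.
Qed.

Lemma mixed_const (xs : @profile R m n) i : nash A xs -> fully_mixed xs ->
  forall y, in_simplex R y -> inner R y (payoff A xs i) = inner R (xs i) (payoff A xs i).
Proof.
move=> [HD Hn] Hfm y [_ Hy].
set p := payoff A xs i; set v := inner R (xs i) p.
have Hle : forall j, p j <= v.
  move=> j; have := Hn i (fun l => (l == j)%:R).
  have -> : inner R (fun l => (l == j)%:R) (payoff A xs i) = p j.
    rewrite /inner (bigD1 j) //= eqxx mul1r big1 ?addr0 // => l /negbTE ->.
    by rewrite mul0r.
  apply; split; first by move=> l; rewrite ler0n.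
  by rewrite (bigD1 j) //= eqxx big1 ?addr0 // => l /negbTE ->.
have Hs : \sum_(j < n i) xs i j * (v - p j) = 0.
  have [_ H1] := HD i.
  under eq_bigr do rewrite mulrBr.
  by rewrite sumrB -mulr_suml H1 mul1r subrr.
have Heq : forall j, p j = v.
  have Hge : forall l, 0 <= v - p l by move=> l; rewrite subr_ge0.
  move=> j; have /psumr_eq0P H := Hs.
  have := H (fun l _ => mulr_ge0 (ltW (Hfm i l)) (Hge l)) j isT; move/eqP; rewrite mulf_eq0 (gt_eqF (Hfm i j)) /= subr_eq0.
  by move/eqP.
rewrite /inner; under eq_bigr do rewrite Heq.
by rewrite -mulr_suml Hy mul1r.
Qed.

End Aux.

Theorem proposition6p1 (R : realType) (m : nat) (n : 'I_m -> nat)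
  (A : @game R m n) (xs : @profile R m n) :
  constant_sum A -> nash A xs ->
  (forall (t : R) (x : R -> @profile R m n),
     0 <= t -> (forall tau, 0 <= tau -> in_Delta (x tau)) ->
     (0 <= \int[lebesgue_measure]_(tau in `[0%R, t]) (supply A xs (x tau))%:E)%E)
  /\
  (fully_mixed xs ->
   forall (t : R) (x : R -> @profile R m n),
     0 <= t -> (forall tau, 0 <= tau -> in_Delta (x tau)) ->
     (\int[lebesgue_measure]_(tau in `[0%R, t]) (supply A xs (x tau))%:E = 0)%E).
Proof.
move=> Hcs Hnash; have [HD Hn] := Hnash; split.
- move=> t x Ht Hx; apply: integral_ge0 => tau.
  rewrite /= in_itv /= => /andP[H0 _].
  rewrite lee_fin (@supply_eq R m n A xs (x tau) Hcs HD (Hx _ H0)); apply: sumr_ge0 => i _.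
  by rewrite subr_ge0; apply: Hn; apply: (Hx _ H0).
- move=> Hfm t x Ht Hx.
  rewrite (eq_integral (fun _ => 0%E)) ?integral0 // => tau.
  rewrite inE /= in_itv /= => /andP[H0 _].
  rewrite (@supply_eq R m n A xs (x tau) Hcs HD (Hx _ H0)) big1 // => i _.
  by rewrite (@mixed_const R m n A xs i Hnash Hfm _ (Hx _ H0 i)) subrr.
Qed.
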